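(* In the setting described in the context, let $\boldsymbol\tau=(\tau,r,<)$, $\boldsymbol\tau'=(\tau',r',<')$, $\boldsymbol\tau''=(\tau'',r'',<'')$ be three ordered rooted spanning trees of $\bar\Gamma$. Define the product $$M(\boldsymbol\tau',\boldsymbol\tau'')\circ_{\boldsymbol\tau} M(\boldsymbol\tau,\boldsymbol\tau') := U^\tau_{rr'}\,M(\boldsymbol\tau',\boldsymbol\tau'')\,U^\tau_{r'r}\,M(\boldsymbol\tau,\boldsymbol\tau'),$$ where $U^\tau_{rr'}$, $U^\tau_{r'r}$ act as diagonal (scalar) matrices, and set $C:=U^\tau_{rr'}U^{\tau'}_{r'r''}U^\tau_{r''r}\in\mathscr A_r$. Then $$M(\boldsymbol\tau',\boldsymbol\tau'')\circ_{\boldsymbol\tau} M(\boldsymbol\tau,\boldsymbol\tau') = C\cdot M(\boldsymbol\tau,\boldsymbol\tau'').$$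
   Context: $\bar\Gamma$ is a finite connected graph with $k$ vertices (multiple edges and loops allowed); $\bar f$ denotes the reverse of an oriented edge $f$. A groupoid representation assigns to every vertex $v$ a separable Hilbert space $\mathscr H_v$ and to each oriented edge $f$ from $v$ to $w$ a unitary $U_f:\mathscr H_v\to\mathscr H_w$ with $U_{\bar f}=U_f^*$; for a walk $\gamma$ through $f_1,\dots,f_m$ in order, $U(\gamma)=U_{f_m}\cdots U_{f_1}$. An ordered rooted spanning tree $\boldsymbol\tau=(\tau,r,<)$ is a spanning tree $\tau$ with root $r$ and a total order $u_1<\dots<u_k$ of the vertices with $u_1=r$. For vertices $x,y$, $U^\tau_{yx}:=U(\gamma)$ for the unique non-backtracking path $\gamma$ in $\tau$ from $x$ to $y$; $U^\tau_{xy}=(U^\tau_{yx})^*$. $\mathscr A_r\subset B(\mathscr H_r)$ is the $C^*$-algebra generated by $U(\gamma)$ for closed walks $\gamma$ at $r$. For two ordered rooted spanning trees $\boldsymbol\tau=(\tau,r,<)$ with vertices $u_1<\dots<u_k$ and $\boldsymbol\tau'=(\tau',r',<')$ with vertices $u'_1<'\dots<'u'_k$, define: $\sigma$ the permutation of $\{1,\dots,k\}$ with $u'_{\sigma(i)}=u_i$; $P$ the $k\times k$ permutation matrix with $Pe_i=e_{\sigma(i)}$; $c_i:=U^\tau_{r u_i}U^{\tau'}_{u_i r'}U^\tau_{r' r}$, a unitary in $\mathscr A_r$; $\Phi$ the diagonal matrix whose entry in position $\sigma(i)$ is $c_i$; and $M(\boldsymbol\tau,\boldsymbol\tau'):=\Phi^*P\in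 M_k(\mathscr A_r)$, acting on $\mathscr H_r^k$. (This matrix satisfies $M H_{\boldsymbol\tau}M^*=U^\tau_{rr'}H_{\boldsymbol\tau'}U^\tau_{r'r}$ for the matrix Hamiltonians.) Analogously $M(\boldsymbol\tau',\boldsymbol\tau'')\in M_k(\mathscr A_{r'})$ acts on $\mathscr H_{r'}^k$ and $M(\boldsymbol\tau,\boldsymbol\tau'')\in M_k(\mathscr A_r)$. *)

(* Defs.v *)
From HB Require Import structures.
From mathcomp Require Import all_boot all_order all_algebra.
From mathcomp Require Import complex.
From mathcomp Require Import reals.
From Stdlib Require Import ClassicalEpsilon.
Unset Printing Implicit Defensive.
Import Order.TTheory GRing.Theory Num.Theory.
Local Open Scope ring_scope.

(* the first argument and conjugate-linear in the second.                   *)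
Record hilbert (R : realType) := Hilbert {
  hcar :> lmodType R[i];
  inner : hcar -> hcar -> R[i];
  inner_linl : forall (a : R[i]) (x y z : hcar),
      inner (a *: x + y) z = a * inner x z + inner y z;
  inner_conj : forall x y : hcar, inner y x = (inner x y)^*;
  inner_ge0 : forall x : hcar, 0 <= inner x x;
  inner_eq0 : forall x : hcar, inner x x = 0 -> x = 0;
  inner_complete : forall u : nat -> hcar,
      (forall e : R[i], 0 < e -> exists N : nat, forall m n : nat,
          (N <= m)%N -> (N <= n)%N -> inner (u m - u n) (u m - u n) < e) ->
      exists l : hcar, forall e : R[i], 0 < e -> exists N : nat, forall n : nat,
          (N <= n)%N -> inner (u n - l) (u n - l) < e;
  inner_separable : exists d : nat -> hcar, forall (x : hcar) (e : R[i]),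
      0 < e -> exists n : nat, inner (x - d n) (x - d n) < e
}.

Arguments inner {R h}.
Arguments hcar {R}.

Definition adj {R : realType} {H1 H2 : hilbert R} (T : H1 -> H2) : H2 -> H1 :=
  epsilon (inhabits (fun _ => 0))
          (fun S : H2 -> H1 => forall a b, inner (T a) b = inner a (S b)).

Definition unitary {R : realType} {H1 H2 : hilbert R} (T : H1 -> H2) : Prop :=
  [/\ forall (a : R[i]) (x y : H1), T (a *: x + y) = a *: T x + T y,
      forall x y : H1, inner (T x) (T y) = inner x y &
      forall y : H2, exists x, T x = y].

Section Graph.
(* src/tgt: origin and terminus; rev f = the reverse edge \bar f.       *)
Variables (V D : finType) (src tgt : D -> V) (rev : D -> D).

Fixpoint walkb (x y : V) (p : seq D) : bool :=
  if p is f :: p' then (src f == x) && walkb (tgt f) y p' else x == y.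

Fixpoint nbtb (p : seq D) : bool :=
  match p with
  | f :: ((g :: _) as p') => (g != rev f) && nbtb p'
  | _ => true
  end.

Definition graph_connected : Prop :=
  forall x y : V, exists p : seq D, walkb x y p.

Definition spanning_tree (T : {set D}) : Prop :=
  [/\ forall f, f \in T -> rev f \in T,
      forall x y : V, exists p : seq D, walkb x y p && all (mem T) p &
      forall (x : V) (p : seq D), walkb x x p -> all (mem T) p -> nbtb p -> p = [::]].

(* Ordered rooted spanning tree (tau, r, <) with k = n.+1 vertices: the   *)
(* total order u_1 < ... < u_k is the bijection u : 'I_k -> V            *)
(* (u_(i+1) = u i), and the root is r = u_1 = u ord0.                      *)
Definition orst (n : nat) (T : {set D}) (u : 'I_n.+1 -> V) : Prop :=
  spanning_tree T /\ bijective u.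

Definition orst_root (n : nat) (u : 'I_n.+1 -> V) : V := u ord0.

Definition tpath (T : {set D}) (x y : V) : seq D :=
  match excluded_middle_informative
          (exists p : seq D, [&& walkb x y p, all (mem T) p & nbtb p]) with
  | left h => xchoose h
  | right _ => [::]
  end.

Variable R : realType.
Variable H : V -> hilbert R.
Variable U : forall f : D, H (src f) -> H (tgt f).

(* transport along an equality of vertices (0 if they differ) *)
Definition castH (x y : V) (h : H x) : H y :=
  match x =P y with
  | ReflectT e => eq_rect x (fun v => H v) h y e
  | ReflectF _ => 0
  end.

Fixpoint vend (x : V) (p : seq D) : V :=
  if p is f :: p' then vend (tgt f) p' else x.

Fixpoint Uw (x : V) (p : seq D) : H x -> H (vend x p) :=
  match p as p0 return H x -> H (vend x p0) with
  | [::] => fun h => h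
  | f :: p' => fun h => @Uw (tgt f) p' (@U f (castH x (src f) h))
  end.

Definition groupoid_rep : Prop :=
  (forall f, unitary (@U f)) /\
  (forall f (a : H (src f)) (b : H (tgt f)),
      inner (@U f a) b = inner a (castH (tgt (rev f)) (src f) (@U (rev f) (castH (tgt f) (src (rev f)) b)))).

Definition Ut (T : {set D}) (y x : V) : H x -> H y :=
  fun h => castH (vend x (tpath T x y)) y (@Uw x (tpath T x y) h).

Definition opmx (n : nat) (x y : V) := 'I_n.+1 -> 'I_n.+1 -> H x -> H y.

Definition mmul n (a b c : V) (A : opmx n b c) (B : opmx n a b) : opmx n a c :=
  fun i j h => \sum_(l < n.+1) A i l (B l j h).

Definition diagop n (x y : V) (S : H x -> H y) : opmx n x y :=
  fun i j => if i == j then S else (fun _ => 0).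

Definition adjmx n (x : V) (A : opmx n x x) : opmx n x x :=
  fun i j => adj (A j i).

Definition uinv n (u : 'I_n.+1 -> V) (y : V) : 'I_n.+1 :=
  odflt ord0 [pick i | u i == y].

Section M.
Variables (n : nat) (T T' : {set D}) (u u' : 'I_n.+1 -> V).
Let r := orst_root n u.
Let r' := orst_root n u'.
Definition sigma (i : 'I_n.+1) : 'I_n.+1 := uinv n u' (u i).
Definition sigmainv (a : 'I_n.+1) : 'I_n.+1 := uinv n u (u' a).
Definition cop (i : 'I_n.+1) : H r -> H r :=
  fun h => Ut T r (u i) (Ut T' (u i) r' (Ut T r' r h)).
Definition Pmx : opmx n r r :=
  fun a b => if a == sigma b then (fun h => h) else (fun _ => 0).
Definition Phimx : opmx n r r :=
  fun a b => if a == b then cop (sigmainv a) else (fun _ => 0).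
Definition Mmx : opmx n r r := mmul n r r r (adjmx n r Phimx) Pmx.
End M.

End Graph.

(* Main.v *)
Require Import Defs.
From HB Require Import structures.
From mathcomp Require Import all_boot all_order all_algebra.
From mathcomp Require Import complex.
From mathcomp Require Import reals.
From Stdlib Require Import ClassicalEpsilon.
Import Order.TTheory GRing.Theory Num.Theory.
Local Open Scope ring_scope.

Set Implicit Arguments.
Unset Strict Implicit.
Section GraphLemmas.
Variables (V D : finType) (src tgt : D -> V) (rv : D -> D).
Hypothesis Hinv : involutive rv.
Hypothesis Hsrc : forall f, src (rv f) = tgt f.

Lemma tgt_rv f : tgt (rv f) = src f.
Proof. by rewrite -Hsrc Hinv. Qed.

Definition revp (p : seq D) : seq D := rev (map rv p).

Lemma revp_cons f p : revp (f :: p) = rcons (revp p) (rv f).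
Proof. by rewrite /revp /= rev_cons. Qed.

Lemma revpK p : revp (revp p) = p.
Proof. by rewrite /revp map_rev revK -map_comp (eq_map (g := id)) ?map_id // => x /=; rewrite Hinv. Qed.

Lemma walkb_cat x z y p q : walkb V D src tgt x z p -> walkb V D src tgt z y q ->
  walkb V D src tgt x y (p ++ q).
Proof.
elim: p x => [|f p IH] x /=; first by move/eqP->.
by case/andP=> -> /IH H1 /H1.
Qed.

Lemma walkb_rev x y p : walkb V D src tgt x y p -> walkb V D src tgt y x (revp p).
Proof.
elim: p x => [|f p IH] x /=; first by move/eqP->.
case/andP=> /eqP <- /IH Hp; rewrite revp_cons -cats1.
by apply: walkb_cat Hp _; rewrite /= Hsrc tgt_rv !eqxx.
Qed.

Lemma nbtb_tl f p : nbtb D rv (f :: p) -> nbtb D rv p.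
Proof. by case: p => //= g p /andP[]. Qed.
Arguments nbtb_tl {f p}.

Lemma nbtb_rcons s a : nbtb D rv (rcons s a) =
  nbtb D rv s && (if s is b :: s' then a != rv (last b s') else true).
Proof.
elim: s => [|b s IH] //=.
case: s IH => [|c s] IH /=; first by rewrite andbT.
by move: IH; rewrite /= => ->; rewrite andbA.
Qed.

Lemma match_rcons (s : seq D) a (P : D -> bool) :
  P a -> match rcons s a with [::] => true | b :: s' => P (last b s') end.
Proof.
move=> Pa; case E: (rcons s a) => [|b s']; first by case: s E.
by have := last_rcons b s a; rewrite E /= => ->.
Qed.

Lemma nbtb_rev p : nbtb D rv p -> nbtb D rv (revp p).
Proof.
elim: p => [|f p IH] //= Hp.
have Np := nbtb_tl Hp.
rewrite revp_cons nbtb_rcons IH //=.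
case: p IH Hp Np => [|g p] //= IH /andP[Hg _] _.
rewrite /revp /= rev_cons; apply: (@match_rcons _ _ (fun x => rv f != rv x)).
by rewrite Hinv eq_sym.
Qed.

Lemma nbtb_cat s a t : nbtb D rv (rcons s a) -> nbtb D rv (a :: t) ->
  nbtb D rv (s ++ a :: t).
Proof.
move=> H1 H2; elim: s H1 => [|b s IH] //=.
case: s IH => [|c s] IH /=; first by case/andP=> ->.
case/andP=> -> H3; rewrite andTb; exact: IH.
Qed.

Lemma all_rev (T : {set D}) p : (forall f, f \in T -> rv f \in T) ->
  all (mem T) p -> all (mem T) (revp p).
Proof.
move=> HT Hp; rewrite /revp all_rev all_map.
by apply/allP=> f /(allP Hp) /= /HT.
Qed.

Definition consr f q := if q is g :: q' then (if g == rv f then q' else f :: q) else [:: f].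

Definition red p := foldr consr [::] p.

Lemma red_ok (T : {set D}) x y p : walkb V D src tgt x y p -> all (mem T) p ->
  [&& walkb V D src tgt x y (red p), all (mem T) (red p) & nbtb D rv (red p)].
Proof.
elim: p x => [|f p IH] x /=; first by move=> ->.
case/andP=> /eqP Hf /IH Hp /andP[fT /Hp /and3P[W A N]].
rewrite /consr; case: (red p) W A N => [|g q] /=.
  by move=> /eqP <- _ _; rewrite Hf !eqxx fT.
case/andP=> /eqP Hg W /andP[gT A] N.
case: eqP => [Egf|/eqP ne].
  by rewrite A (nbtb_tl N) andbT; move: W; rewrite Egf tgt_rv Hf => ->.
by rewrite /= Hf eqxx Hg eqxx W fT gT A ne N.
Qed.

Lemma tree_unique (T : {set D}) : spanning_tree V D src tgt rv T ->
  forall x y p q,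
  [&& walkb V D src tgt x y p, all (mem T) p & nbtb D rv p] ->
  [&& walkb V D src tgt x y q, all (mem T) q & nbtb D rv q] -> p = q.
Proof.
case=> HT _ Hcyc.
move=> x y p; elim: p x => [|f p IH] x [|g q] //.
- move=> /and3P[/eqP-> _ _] /and3P[W A N].
  by move: (Hcyc y (g :: q) W A N).
- move=> /and3P[W A N] /and3P[/eqP E _ _]; subst y.
  by move: (Hcyc x (f :: p) W A N).
case/and3P=> /andP[/eqP Hf W] /andP[fT A] N.
case/and3P=> /andP[/eqP Hg W'] /andP[gT A'] N'.
have [Efg|nfg] := eqVneq f g.
  subst g; congr (_ :: _); apply: (IH (tgt f) q); apply/and3P; split; rewrite ?(nbtb_tl N) ?(nbtb_tl N') //.
exfalso.
have Wp : walkb V D src tgt x y (f :: p) by rewrite /= Hf eqxx; exact: W.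
have Ap : all (mem T) (f :: p) by apply/andP; split.
have Wq : walkb V D src tgt x y (g :: q) by rewrite /= Hg eqxx; exact: W'.
have Aq : all (mem T) (g :: q) by apply/andP; split.
move: (walkb_rev Wp) (all_rev HT Ap) (nbtb_rev N).
rewrite revp_cons => Wr Ar Nr.
have W2 : walkb V D src tgt y y (revp p ++ rv f :: g :: q).
  by rewrite -cat_rcons; apply: walkb_cat Wr Wq.
have A2 : all (mem T) (revp p ++ rv f :: g :: q).
  by rewrite -cat_rcons all_cat Ar Aq.
have N2 : nbtb D rv (revp p ++ rv f :: g :: q).
  by apply: nbtb_cat Nr _; rewrite /= Hinv eq_sym nfg; exact: N'.
by move: (Hcyc y _ W2 A2 N2); case: (revp p).
Qed.

Lemma tpath_ok (T : {set D}) x y : spanning_tree V D src tgt rv T ->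
  [&& walkb V D src tgt x y (tpath V D src tgt rv T x y),
      all (mem T) (tpath V D src tgt rv T x y) & nbtb D rv (tpath V D src tgt rv T x y)].
Proof.
move=> HT; rewrite /tpath; case: excluded_middle_informative => [h|nh].
  exact: (xchooseP h).
exfalso; apply: nh.
case: HT => _ /(_ x y) [p /andP[W A]] _.
by exists (red p); apply: red_ok.
Qed.

Lemma tpath_rev (T : {set D}) x y : spanning_tree V D src tgt rv T ->
  tpath V D src tgt rv T y x = revp (tpath V D src tgt rv T x y).
Proof.
move=> HT; apply: (tree_unique HT (tpath_ok y x HT)).
case/and3P: (tpath_ok x y HT) => W A N.
rewrite walkb_rev // nbtb_rev // all_rev //; by case: HT.
Qed.

End GraphLemmas.

Section Hilb.
Variables (V D : finType) (src tgt : D -> V) (rv : D -> D).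
Hypothesis Hinv : involutive rv.
Hypothesis Hsrc : forall f, src (rv f) = tgt f.
Variable R : realType.
Variable H : V -> hilbert R.
Variable U : forall f : D, H (src f) -> H (tgt f).
Hypothesis HU : groupoid_rep V D src tgt rv R H U.

Lemma inner0l (K : hilbert R) (z : K) : inner (0 : K) z = 0.
Proof.
have := inner_linl R K 1 0 0 z; rewrite scaler0 addr0 mul1r => e.
by apply: (addrI (inner (0 : K) z)); rewrite addr0 -e.
Qed.

Lemma innerBl (K : hilbert R) (s t z : K) : inner (s - t) z = inner s z - inner t z.
Proof.
have := inner_linl R K (-1) t s z; rewrite scaleN1r mulN1r => e.
by rewrite addrC e addrC.
Qed.

Lemma inner_ext (K : hilbert R) (s t : K) : (forall a, inner a s = inner a t) -> s = t.
Proof.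
move=> Hst; have Hl : forall a, inner s a = inner t a.
  by move=> a; rewrite (inner_conj R K a s) (inner_conj R K a t) Hst.
apply/eqP; rewrite -subr_eq0; apply/eqP; apply: inner_eq0.
by rewrite innerBl Hl subrr.
Qed.

Lemma adj_eq (K1 K2 : hilbert R) (A : K1 -> K2) (A' : K2 -> K1) :
  (forall a b, inner (A a) b = inner a (A' b)) -> forall b, adj A b = A' b.
Proof.
move=> HA b; rewrite /adj.
have := epsilon_spec (inhabits (fun _ : K2 => (0 : K1)))
  (fun S : K2 -> K1 => forall a b, inner (A a) b = inner a (S b)) (ex_intro _ A' HA).
move=> HS; apply: inner_ext => a; by rewrite -HS HA.
Qed.

Lemma adj_zero (K1 K2 : hilbert R) (b : K2) : adj (fun _ : K1 => (0 : K2)) b = 0.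
Proof.
apply: (@adj_eq K1 K2 _ (fun _ => 0)) => a c.
by rewrite inner0l (inner_conj R K1) inner0l conjC0.
Qed.

Lemma castH_id x (h : H x) : castH V R H x x h = h.
Proof. by rewrite /castH; case: (x =P x) => [e|]; [rewrite (eq_axiomK e) | ]. Qed.

Lemma castH_trans x y z (h : H x) : x = y ->
  castH V R H y z (castH V R H x y h) = castH V R H x z h.
Proof. by move=> e; subst y; rewrite castH_id. Qed.

Definition Wk x y p (h : H x) : H y :=
  castH V R H (vend V D tgt x p) y (Uw V D src tgt R H U x p h).

Lemma Wk_cat x z y p q (h : H x) : walkb V D src tgt x z p ->
  Wk y (p ++ q) h = Wk y q (Wk z p h).
Proof.
elim: p x h => [|f p IH] x h /=.
  by move/eqP=> e; subst z; rewrite /Wk /= castH_id.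
case/andP=> _ W; exact: (IH (tgt f) _ W).
Qed.

Lemma edge_cancel f (a : H (src f)) :
  castH V R H (tgt (rv f)) (src f) (@U (rv f) (castH V R H (tgt f) (src (rv f)) (@U f a))) = a.
Proof.
case: HU => Hun Hadj.
apply: inner_ext => a'.
rewrite -Hadj.
by case: (Hun f) => _ -> _.
Qed.

Lemma Wk_rev x y p (h : H x) : walkb V D src tgt x y p ->
  Wk x (revp rv p) (Wk y p h) = h.
Proof.
elim: p x h => [|f p IH] x h /=.
  by move/eqP=> e; subst y; rewrite /Wk /= !castH_id.
case/andP=> /eqP Hf W.
rewrite revp_cons -cats1 (Wk_cat _ _ _ (walkb_rev Hinv Hsrc W)).
have -> : Wk (tgt f) (revp rv p) (Wk y (f :: p) h) = U (castH V R H x (src f) h).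
  exact: (IH (tgt f)).
rewrite /Wk /= -(castH_trans _ _ (tgt_rv Hinv Hsrc f)) edge_cancel.
by rewrite castH_trans ?castH_id.
Qed.

Lemma Wk_inner x y p (a b : H x) : walkb V D src tgt x y p ->
  inner (Wk y p a) (Wk y p b) = inner a b.
Proof.
elim: p x a b => [|f p IH] x a b /=.
  by move/eqP=> e; subst y; rewrite /Wk /= !castH_id.
case/andP=> /eqP Hf W; subst x.
rewrite /Wk /=. rewrite -/(Wk y p _) -/(Wk y p _) (IH _ _ _ W) !castH_id.
by case: HU => /(_ f) [_ -> _] _.
Qed.

Section Tree.
Variable T : {set D}.
Hypothesis HT : spanning_tree V D src tgt rv T.

Local Notation UT := (Ut V D src tgt rv R H U T).

Lemma UtK x y (h : H y) : UT y x (UT x y h) = h.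
Proof.
rewrite /Ut -/(Wk _ _ _) -/(Wk _ _ _) (tpath_rev Hinv Hsrc _ _ HT).
apply: Wk_rev. by case/and3P: (tpath_ok Hinv Hsrc y x HT).
Qed.

Lemma Ut_inner x y (a b : H x) : inner (UT y x a) (UT y x b) = inner a b.
Proof.
rewrite /Ut -/(Wk _ _ _) -/(Wk _ _ _); apply: Wk_inner.
by case/and3P: (tpath_ok Hinv Hsrc x y HT).
Qed.

Lemma Ut_adj x y (a : H x) (b : H y) : inner (UT y x a) b = inner a (UT x y b).
Proof. by rewrite -{1}(@UtK x y b) Ut_inner. Qed.

Lemma Ut0 x y : UT y x 0 = 0.
Proof. by apply: inner_eq0; rewrite Ut_inner inner0l. Qed.

End Tree.
End Hilb.

Lemma uinv_can (V : finType) n (u : 'I_n.+1 -> V) : bijective u -> forall y, u (uinv V n u y) = y.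
Proof.
case=> g ug gu y; rewrite /uinv; case: pickP => [i /eqP //|none].
by move: (none (g y)); rewrite gu eqxx.
Qed.

Lemma uinv_inj (V : finType) n (u : 'I_n.+1 -> V) : bijective u -> forall i, uinv V n u (u i) = i.
Proof. by move=> bu i; apply: (bij_inj bu); rewrite uinv_can. Qed.

Lemma sum_single (M : nmodType) k (F : 'I_k -> M) k0 :
  (forall l, l != k0 -> F l = 0) -> \sum_l F l = F k0.
Proof. by move=> HF; rewrite (bigD1 k0) //= big1 ?addr0 // => l /HF. Qed.

Section Mat.
Variables (V D : finType) (src tgt : D -> V) (rv : D -> D).
Hypothesis Hinv : involutive rv.
Hypothesis Hsrc : forall f, src (rv f) = tgt f.
Variable R : realType.
Variable H : V -> hilbert R.
Variable U : forall f : D, H (src f) -> H (tgt f).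
Hypothesis HU : groupoid_rep V D src tgt rv R H U.
Variable n : nat.

Local Notation Ut := (Ut V D src tgt rv R H U).

Lemma mmul_diag x y z (S : H y -> H z) (B : opmx V R H n x y) i j h :
  mmul V R H n x y z (diagop V R H n y z S) B i j h = S (B i j h).
Proof.
rewrite /mmul (@sum_single _ _ _ i) /diagop ?eqxx // => l.
by rewrite eq_sym => /negbTE ->.
Qed.

Lemma diag_sum y z (S : H y -> H z) i (F : 'I_n.+1 -> H y) :
  \sum_l diagop V R H n y z S i l (F l) = S (F i).
Proof.
rewrite (@sum_single _ _ _ i) /diagop ?eqxx // => l.
by rewrite eq_sym => /negbTE ->.
Qed.

Lemma adj0 (K1 K2 : hilbert R) (A : K1 -> K2) (A' : K2 -> K1) :
  (forall a b, inner (A a) b = inner a (A' b)) -> adj A 0 = 0.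
Proof.
move=> HA; rewrite (adj_eq HA); apply: inner_ext => a.
rewrite -HA (inner_conj R K2 _ (A a)) (inner_conj R K1 _ a) !inner0l.
by [].
Qed.

Lemma Mmx_entry (T T' : {set D}) (u u' : 'I_n.+1 -> V) :
  spanning_tree V D src tgt rv T -> spanning_tree V D src tgt rv T' ->
  bijective u -> bijective u' -> forall a b (h : H (orst_root V n u)),
  Mmx V D src tgt rv R H U n T T' u u' a b h =
  if a == sigma V n u u' b then
    Ut T (orst_root V n u) (orst_root V n u')
      (Ut T' (orst_root V n u') (u b) (Ut T (u b) (orst_root V n u) h))
  else 0.
Proof.
move=> HT HT' bu bu' a b h.
have copA : forall i k c, inner (cop V D src tgt rv R H U n T T' u u' i k) c =
   inner k (Ut T (orst_root V n u) (orst_root V n u')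
      (Ut T' (orst_root V n u') (u i) (Ut T (u i) (orst_root V n u) c))).
  by move=> i k c; rewrite /cop !(Ut_adj Hinv Hsrc HU).
rewrite /Mmx /mmul (@sum_single _ _ _ (sigma V n u u' b)).
  rewrite /Pmx eqxx /adjmx /Phimx /= (eq_sym a).
  case: eqP => [e|ne].
    subst a; rewrite /sigmainv /sigma (uinv_can bu') (uinv_inj bu).
    by rewrite (adj_eq (copA b)).
  exact: adj_zero.
move=> l nl; rewrite /Pmx (negbTE nl) /adjmx /Phimx.
case: (l == a); first exact: (adj0 (copA _)).
exact: adj_zero.
Qed.

End Mat.

Theorem mainTheorem2
  (V D : finType) (src tgt : D -> V) (rev : D -> D)
  (Hrev_inv : involutive rev) (Hrev_nofix : forall f, rev f != f)
  (Hrev_src : forall f, src (rev f) = tgt f)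
  (Hconn : graph_connected V D src tgt)
  (n : nat) (HV : #|V| = n.+1)
  (R : realType) (H : V -> hilbert R)
  (U : forall f : D, H (src f) -> H (tgt f))
  (HU : groupoid_rep V D src tgt rev R H U)
  (T T' T'' : {set D}) (u u' u'' : 'I_n.+1 -> V)
  (Ho : orst V D src tgt rev n T u) (Ho' : orst V D src tgt rev n T' u')
  (Ho'' : orst V D src tgt rev n T'' u'') :
  let r := orst_root V n u in let r' := orst_root V n u' in let r'' := orst_root V n u'' in
  let C : H r -> H r :=
    fun h => Ut V D src tgt rev R H U T r r' (Ut V D src tgt rev R H U T' r' r'' (Ut V D src tgt rev R H U T r'' r h)) in
  forall (i j : 'I_n.+1) (h : H r),
    mmul V R H n r r' r (diagop V R H n r' r (Ut V D src tgt rev R H U T r r'))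
      (mmul V R H n r r' r' (Mmx V D src tgt rev R H U n T' T'' u' u'')
        (mmul V R H n r r r' (diagop V R H n r r' (Ut V D src tgt rev R H U T r' r))
           (Mmx V D src tgt rev R H U n T T' u u'))) i j h
    = mmul V R H n r r r (diagop V R H n r r C)
        (Mmx V D src tgt rev R H U n T T'' u u'') i j h.
Proof.
move=> r r' r'' C i j h.
case: Ho => HT bu; case: Ho' => HT' bu'; case: Ho'' => HT'' bu''.
rewrite !mmul_diag /C.
rewrite (Mmx_entry Hrev_inv Hrev_src HU HT HT'' bu bu'').
rewrite /mmul; under eq_bigr => l _ do rewrite diag_sum.
rewrite (@sum_single _ _ _ (sigma V n u u' j)); last first.
  move=> l nl; rewrite (Mmx_entry Hrev_inv Hrev_src HU HT HT' bu bu') (negbTE nl).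
  rewrite (Ut0 Hrev_inv Hrev_src HU HT) (Mmx_entry Hrev_inv Hrev_src HU HT' HT'' bu' bu'').
  by case: ifP => _ //; rewrite !(Ut0 Hrev_inv Hrev_src HU).
rewrite (Mmx_entry Hrev_inv Hrev_src HU HT HT' bu bu') eqxx.
rewrite (Mmx_entry Hrev_inv Hrev_src HU HT' HT'' bu' bu'').
have -> : sigma V n u' u'' (sigma V n u u' j) = sigma V n u u'' j.
  by rewrite /sigma (uinv_can bu').
case: eqP => _; last by rewrite !(Ut0 Hrev_inv Hrev_src HU).
have e : u' (sigma V n u u' j) = u j by rewrite /sigma (uinv_can bu').
move: (u' (sigma V n u u' j)) e => w e; subst w.
rewrite !(UtK Hrev_inv Hrev_src HU HT) !(UtK Hrev_inv Hrev_src HU HT').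
by [].
Qed.
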